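(* Let $\mathcal{C}$ be a periodic cylinder of $\Phi$ of even period $2n$, with itinerary $i_0,\dots,i_{2n-1}$ (indices taken mod $2n$, so $i_{2n}=i_0$) and angle of departure $\hat\theta_0$. If $\mathcal{C}$ is $\lambda^-$-stable or $\lambda^+$-stable, then $$\hat\theta_0=\frac{1}{2n}\sum_{k=0}^{2n-1}(-1)^{k+1}k\,\beta_{i_k,i_{k+1}}.$$
   Context: Let $P$ be a simply connected polygon in $\mathbb{R}^2$ with $d$ sides, labeled $1,\dots,d$, with $\partial P$ oriented anticlockwise. The billiard map $\Phi$ acts on unit vectors $(x,v)$ with $x\in\partial P$ and $v$ pointing into $P$: $\Phi(x,v)=(\bar x,\bar v)$, where $\bar x$ is the first point at which the ray from $x$ in direction $v$ meets $\partial P$ and $\bar v$ is the inward vector obtained by reflecting $v$ in the side containing $\bar x$. Vectors based at vertices, and vectors whose image would be based at a vertex, are excluded; the remaining domain is $M'$. Points of $M'$ have coordinates $(s,\theta)$, $s$ the arc-length parameter of $x$ on $\partial P$, $\theta\in(-\pi/2,\pi/2)$ the oriented angle between $v$ and the inward normal at $x$. $\Sigma_{i,j}$ is the set of $(s,\theta)\in M'$ with $x$ on side $i$ and $\bar x$ on side $j$. $\beta_{i,j}$ denotes $\pi$ minus the angle formed by the oriented sides $i$ and $j$; for $(s,\theta)\in\Sigma_{i,j}$ the angle coordinate of $\Phi(s,\theta)$ is $\beta_{i,j}-\theta$. For $\lambda>0$ let $R_\lambda(s,\theta)=(s,\lambda\theta)$ and $\Phi_\lambda:=R_\lambda\circ\Phi$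 (pinball billiard map for $\lambda\neq1$). The itinerary of an orbit $(s_k,\theta_k)$ is the sequence $(i_k)$ with $(s_k,\theta_k)\in\Sigma_{i_k,i_{k+1}}$. Every periodic orbit of $\Phi$ lies in a periodic cylinder: a maximal one-parameter family of parallel periodic orbits of $\Phi$ with the same itinerary. For a cylinder of period $2n$ with itinerary $i_0,\dots,i_{2n-1}$, the angles of its orbits at the successive collisions are constants $\hat\theta_0,\dots,\hat\theta_{2n-1}$; $\hat\theta_0$ (the angle at side $i_0$) is the angle of departure. A periodic orbit $q$ of $\Phi$ is $\lambda^{+}$-stable (resp. $\lambda^-$-stable) if there exist a strictly decreasing (resp. strictly increasing) sequence $\lambda_n\to1$ and, for each $n$, a periodic orbit $q_n$ of $\Phi_{\lambda_n}$ with the same itinerary as $q$ such that $q_n\to q$. A periodic cylinder is $\lambda^\pm$-stable if it contains a $\lambda^\pm$-stable periodic orbit. *)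

(* Defs.v *)
From Stdlib Require Import Reals Lra Lia Arith.
Open Scope R_scope.

(** Side [i] (0 <= i < d) is the oriented segment
    from [Vm i] to [Vm (i+1)].  (Sides are labelled 0..d-1 instead of 1..d.) *)

Definition pt := (R * R)%type.

Definition Vm (d : nat) (V : nat -> pt) (i : nat) : pt := V (i mod d)%nat.

Definition cross (a b : pt) : R := fst a * snd b - snd a * fst b.
Definition dot (a b : pt) : R := fst a * fst b + snd a * snd b.
Definition vsub (a b : pt) : pt := (fst a - fst b, snd a - snd b).
Definition vadd (a b : pt) : pt := (fst a + fst b, snd a + snd b).
Definition vscale (c : R) (a : pt) : pt := (c * fst a, c * snd a).

Definition edge d V i : pt := vsub (Vm d V (S i)) (Vm d V i).
Definition len d V i : R := sqrt (dot (edge d V i) (edge d V i)).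
Definition e_dir d V i : pt := vscale (/ len d V i) (edge d V i).
(* boundary oriented anticlockwise => interior on the left *)
Definition n_in d V i : pt := (- snd (e_dir d V i), fst (e_dir d V i)).

Definition on_side_closed d V (i : nat) (x : pt) : Prop :=
  exists t, 0 <= t <= 1 /\ x = vadd (Vm d V i) (vscale t (edge d V i)).
Definition on_boundary d V (x : pt) : Prop :=
  exists i, (i < d)%nat /\ on_side_closed d V i x.

Definition simple_polygon (d : nat) (V : nat -> pt) : Prop :=
  (3 <= d)%nat /\
  (forall i j, (i < d)%nat -> (j < d)%nat -> i <> j -> Vm d V i <> Vm d V j) /\
  (* consecutive sides are not collinear (genuinely d sides) *)
  (forall i, (i < d)%nat -> cross (edge d V i) (edge d V (S i)) <> 0) /\
  (forall i j x, (i < d)%nat -> (j < d)%nat -> i <> j ->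
     on_side_closed d V i x -> on_side_closed d V j x ->
     ((S i mod d)%nat = j /\ x = Vm d V j) \/ ((S j mod d)%nat = i /\ x = Vm d V i)) /\
  (* anticlockwise orientation: positive signed area *)
  0 < sum_f_R0 (fun i => cross (Vm d V i) (Vm d V (S i))) (d - 1).

Definition Scum d V (i : nat) : R := sum_f_R0 (fun k => len d V k) i - len d V i.
(* Scum i = len 0 + ... + len (i-1) *)

Definition OnSide d V (i : nat) (s : R) : Prop :=
  (i < d)%nat /\ Scum d V i < s < Scum d V (S i).

Definition pos d V (i : nat) (s : R) : pt :=
  vadd (Vm d V i) (vscale ((s - Scum d V i) / len d V i) (edge d V i)).

(** unit vector at side i making oriented angle theta with the inward normal
    (theta = oriented angle from v to the inward normal) *)
Definition dirv d V (i : nat) (theta : R) : pt :=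
  vadd (vscale (cos theta) (n_in d V i)) (vscale (sin theta) (e_dir d V i)).

Definition reflect d V (j : nat) (v : pt) : pt :=
  vsub v (vscale (2 * dot v (n_in d V j)) (n_in d V j)).

(** * The billiard map Phi, as a relation on M' (coordinates (s, theta)),
    recording the sides i, j with (s,theta) in Sigma_{i,j}. *)
Definition BStep d V (q q' : R * R) (i j : nat) : Prop :=
  let (s, th) := q in
  let (s', th') := q' in
  OnSide d V i s /\ - (PI / 2) < th < PI / 2 /\
  OnSide d V j s' /\ - (PI / 2) < th' < PI / 2 /\
  exists t, 0 < t /\
    pos d V j s' = vadd (pos d V i s) (vscale t (dirv d V i th)) /\
    (forall t', 0 < t' < t ->
       ~ on_boundary d V (vadd (pos d V i s) (vscale t' (dirv d V i th)))) /\
    reflect d V j (dirv d V i th) = dirv d V j th'.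

Definition PStep d V (lam : R) (q q' : R * R) (i j : nat) : Prop :=
  exists th'', BStep d V q (fst q', th'') i j /\ snd q' = lam * th''.

Definition Orbit d V (lam : R) (q : nat -> R * R) (it : nat -> nat) : Prop :=
  forall k, PStep d V lam (q k) (q (S k)) (it k) (it (S k)).

Definition PeriodicOrbit d V (lam : R) (q : nat -> R * R) (it : nat -> nat) : Prop :=
  Orbit d V lam q it /\ exists p, (0 < p)%nat /\ forall k, q (k + p)%nat = q k.

Definition orbit_cv (Q : nat -> nat -> R * R) (q : nat -> R * R) : Prop :=
  forall k, Un_cv (fun m => fst (Q m k)) (fst (q k)) /\
            Un_cv (fun m => snd (Q m k)) (snd (q k)).

Definition lam_plus_stable d V (q : nat -> R * R) (it : nat -> nat) : Prop :=
  exists lam : nat -> R,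
    (forall m, 0 < lam m) /\ (forall m, lam (S m) < lam m) /\ Un_cv lam 1 /\
    exists Q : nat -> nat -> R * R,
      (forall m, PeriodicOrbit d V (lam m) (Q m) it) /\ orbit_cv Q q.

Definition lam_minus_stable d V (q : nat -> R * R) (it : nat -> nat) : Prop :=
  exists lam : nat -> R,
    (forall m, 0 < lam m) /\ (forall m, lam m < lam (S m)) /\ Un_cv lam 1 /\
    exists Q : nat -> nat -> R * R,
      (forall m, PeriodicOrbit d V (lam m) (Q m) it) /\ orbit_cv Q q.

Definition side_angle d V (i j : nat) : R :=
  let c := dot (e_dir d V i) (e_dir d V j) in
  let sn := cross (e_dir d V i) (e_dir d V j) in
  if Rle_dec 0 sn then acos c else 2 * PI - acos c.

Definition beta d V (i j : nat) : R := PI - side_angle d V i j.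

(* Main.v *)
Require Import Defs.
From Stdlib Require Import Reals Lra Lia Arith ZArith.
Open Scope R_scope.

Lemma ang_unique x y : -(PI/2) < x < PI/2 -> -(3*(PI/2)) < y < 3*(PI/2) ->
  cos x = cos y -> sin x = sin y -> x = y.
Proof.
  intros Hx Hy Hc Hs.
  set (z := (y - x)/2).
  assert (Hcz : cos (2*z) = 1).
  { replace (2*z) with (y - x) by (unfold z; field).
    rewrite cos_minus, <- Hc, <- Hs.
    pose proof (sin2_cos2 x). unfold Rsqr in *. lra. }
  rewrite cos_2a_sin in Hcz.
  assert (Hsz : sin z = 0) by nra.
  destruct (sin_eq_0_0 _ Hsz) as [k Hk].
  assert (HP := PI_RGT_0).
  assert (-1 < IZR k < 1).
  { assert (-PI < z < PI) by (unfold z; lra).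
    rewrite Hk in H. split.
    - apply Rmult_lt_reg_r with PI; lra.
    - apply Rmult_lt_reg_r with PI; lra. }
  destruct H as [H1 H2]. apply lt_IZR in H1. apply lt_IZR in H2.
  assert (k = 0%Z) by lia. subst k. simpl in Hk.
  unfold z in Hk. lra.
Qed.

Lemma edge_pos d V i : simple_polygon d V -> (i < d)%nat -> 0 < dot (edge d V i) (edge d V i).
Proof.
  intros [_ [_ [H3 _]]] Hi. specialize (H3 i Hi).
  unfold cross, dot in *. destruct (edge d V i) as [a b]; simpl in *.
  destruct (edge d V (S i)) as [c e]; simpl in *.
  destruct (Req_dec a 0); destruct (Req_dec b 0).
  - subst. exfalso. apply H3. ring.
  - assert (0 < b*b) by (apply Rsqr_pos_lt; auto). nra.
  - assert (0 < a*a) by (apply Rsqr_pos_lt; auto). nra.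
  - assert (0 < a*a) by (apply Rsqr_pos_lt; auto). nra.
Qed.

Lemma e_unit d V i : simple_polygon d V -> (i < d)%nat ->
  fst (e_dir d V i) * fst (e_dir d V i) + snd (e_dir d V i) * snd (e_dir d V i) = 1.
Proof.
  intros HP Hi. pose proof (edge_pos d V i HP Hi) as Hp.
  unfold e_dir, len. unfold dot in *.
  destruct (edge d V i) as [a b]. unfold vscale; simpl in *.
  set (D := a*a+b*b) in *.
  assert (Hs : 0 < sqrt D) by (apply sqrt_lt_R0; auto).
  assert (Hss : sqrt D * sqrt D = D) by (apply sqrt_sqrt; lra).
  replace (/ sqrt D * a * (/ sqrt D * a) + / sqrt D * b * (/ sqrt D * b))
    with (D / (sqrt D * sqrt D)) by (unfold D; field; apply Rgt_not_eq; exact Hs).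
  rewrite Hss. field. lra.
Qed.

Lemma bstep_angle d V q q' i j : simple_polygon d V -> BStep d V q q' i j ->
  snd q' = beta d V i j - snd q.
Proof.
  intros HP. destruct q as [s th], q' as [s' th']. simpl.
  intros [[Hi _] [Hth [[Hj _] [Hth' [t [_ [_ [_ Href]]]]]]]].
  pose proof (e_unit d V i HP Hi) as Ui.
  pose proof (e_unit d V j HP Hj) as Uj.
  unfold beta, side_angle.
  unfold reflect, dirv, n_in, vsub, vadd, vscale, dot in Href.
  destruct (e_dir d V i) as [a b]. destruct (e_dir d V j) as [p r].
  simpl in *. injection Href as H1 H2.
  set (c := a*p + b*r). set (sn := a*r - b*p).
  assert (Hcs : c*c + sn*sn = 1) by (unfold c, sn; nra).
  assert (Ccos : cos th' = - c * cos th + sn * sin th).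
  { assert (cos th' = -r * (cos th' * - r + sin th' * p) + p * (cos th' * p + sin th' * r)).
    { replace (-r * (cos th' * - r + sin th' * p) + p * (cos th' * p + sin th' * r)) with (cos th' * (p*p+r*r)) by ring. rewrite Uj; ring. }
    rewrite H, <- H1, <- H2. unfold c, sn.
    set (w := (cos th * - b + sin th * a) * - r + (cos th * a + sin th * b) * p).
    apply Rminus_diag_uniq.
    transitivity (-2 * w * (p*p+r*r-1)); [unfold w; ring | rewrite Uj; ring]. }
  assert (Csin : sin th' = sn * cos th + c * sin th).
  { assert (sin th' = p * (cos th' * - r + sin th' * p) + r * (cos th' * p + sin th' * r)).
    { replace (p * (cos th' * - r + sin th' * p) + r * (cos th' * p + sin th' * r)) with (sin th' * (p*p+r*r)) by ring. rewrite Uj; ring. }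
    rewrite H, <- H1, <- H2. unfold c, sn. ring. }
  assert (Hc1 : -1 <= c <= 1) by nra.
  assert (HPI := PI_RGT_0).
  pose proof (acos_bound c) as Hab.
  assert (Hsq : sqrt (1 - c²) = Rabs sn).
  { replace (1 - c²) with (sn * sn) by (unfold Rsqr; lra). apply sqrt_Rsqr_abs. }
  change (cross (a,b) (p,r)) with sn. change (dot (a,b) (p,r)) with c.
  destruct (Rle_dec 0 sn) as [Hs|Hs].
  - apply ang_unique; try lra.
    + rewrite Ccos, cos_minus, Rtrigo_facts.cos_pi_minus, sin_PI_x, cos_acos, sin_acos by lra.
      rewrite Hsq, Rabs_right by lra. ring.
    + rewrite Csin, sin_minus, Rtrigo_facts.cos_pi_minus, sin_PI_x, cos_acos, sin_acos by lra.
      rewrite Hsq, Rabs_right by lra. ring.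
  - apply ang_unique; try lra.
    + replace (PI - (2 * PI - acos c) - th) with (acos c - th - PI) by ring.
      rewrite cos_minus, cos_PI, sin_PI, cos_minus, cos_acos, sin_acos by lra.
      rewrite Hsq, Rabs_left by lra. rewrite Ccos. ring.
    + replace (PI - (2 * PI - acos c) - th) with (acos c - th - PI) by ring.
      rewrite sin_minus, cos_PI, sin_PI, sin_minus, cos_acos, sin_acos by lra.
      rewrite Hsq, Rabs_left by lra. rewrite Csin. ring.
Qed.

Fixpoint salt (N : nat) (f : nat -> R) : R :=
  match N with O => 0 | S N' => salt N' f + f N' end.

Lemma salt_sum f N : sum_f_R0 f N = salt (S N) f.
Proof. induction N; simpl in *; [ring | rewrite IHN; ring]. Qed.

Lemma salt_ext N f g : (forall k, (k < N)%nat -> f k = g k) -> salt N f = salt N g.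
Proof. induction N; intros H; simpl; auto. rewrite IHN, H; auto. Qed.

Lemma salt_lin N f g a b : salt N (fun k => a * f k + b * g k) = a * salt N f + b * salt N g.
Proof. induction N; simpl; [ring | rewrite IHN; ring]. Qed.

Lemma salt_tele u N : salt N (fun k => (-1)^k * (u (S k) + u k)) = u O - (-1)^N * u N.
Proof. induction N; simpl; [ring | rewrite IHN; ring]. Qed.

Lemma salt_T th N : salt N (fun k => (-1)^(S k) * INR k * (th k + th (S k))) =
  th O - salt N (fun k => (-1)^k * th k) + (-1)^N * (INR N - 1) * th N.
Proof. induction N. simpl; ring. cbn [salt]. rewrite IHN, S_INR. simpl. ring. Qed.

Lemma salt_cv N (f : nat -> nat -> R) g : (forall k, Un_cv (fun m => f m k) (g k)) ->
  Un_cv (fun m => salt N (f m)) (salt N g).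
Proof.
  intros H. induction N; simpl.
  - intros e He. exists O. intros. rewrite R_dist_eq. lra.
  - apply CV_plus; auto.
Qed.

Lemma Scum_S d V i : Scum d V (S i) = Scum d V i + len d V i.
Proof. unfold Scum. simpl. ring. Qed.

Lemma Scum_mono d V i k : Scum d V i <= Scum d V (i + k).
Proof.
  induction k. rewrite Nat.add_0_r; lra.
  rewrite Nat.add_succ_r, Scum_S. pose proof (sqrt_pos (dot (edge d V (i+k)) (edge d V (i+k)))).
  unfold len. lra.
Qed.

Lemma side_unique d V i j s : OnSide d V i s -> OnSide d V j s -> i = j.
Proof.
  intros [_ [Hi1 Hi2]] [_ [Hj1 Hj2]].
  destruct (lt_eq_lt_dec i j) as [[H|H]|H]; auto; exfalso.
  - pose proof (Scum_mono d V (S i) (j - S i)). replace (S i + (j - S i))%nat with j in H0 by lia. lra.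
  - pose proof (Scum_mono d V (S j) (i - S j)). replace (S j + (i - S j))%nat with i in H0 by lia. lra.
Qed.

Lemma pstep_angle d V lam Q R i j : simple_polygon d V -> PStep d V lam Q R i j ->
  snd R = lam * (beta d V i j - snd Q).
Proof.
  intros HP [th [HB HR]]. rewrite HR. apply bstep_angle in HB; auto. simpl in HB. rewrite HB. ring.
Qed.

Lemma pstep_side d V lam Q R i j : PStep d V lam Q R i j -> OnSide d V i (fst Q).
Proof.
  intros [th [HB _]]. revert HB. destruct Q as [s t]. simpl. intros [H _]. exact H.
Qed.

Lemma pinball_alt (N p : nat) (lam : R) (u bet : nat -> R) :
  0 < lam -> lam <> 1 -> (0 < p)%nat -> (forall k, u (k + p)%nat = u k) ->
  (forall k, u (S k) = lam * (bet k - u k)) -> (forall k, bet (k + N)%nat = bet k) ->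
  (-1)^N = 1 -> salt N (fun k => (-1)^k * bet k) = 0 ->
  salt N (fun k => (-1)^k * u k) = 0.
Proof.
  intros Hl Hl1 Hp Hper Hu Hb HN HB.
  set (w := fun k => u (k + N)%nat - u k).
  assert (Hw : forall k, w k = (- lam)^k * w O).
  { induction k. simpl; ring.
    assert (w (S k) = - lam * w k).
    { unfold w. replace (S k + N)%nat with (S (k + N)) by lia.
      rewrite !Hu, Hb. ring. }
    rewrite H, IHk. simpl. ring. }
  assert (Hw0 : w O = 0).
  { assert (E : w p = w O).
    { unfold w. replace (p + N)%nat with (N + p)%nat by lia. rewrite Hper.
      pose proof (Hper O) as H0; simpl in H0; rewrite H0. reflexivity. }
    rewrite Hw in E.
    destruct (Req_dec (w O) 0) as [Z|Z]; auto. exfalso.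
    assert (E1 : (-lam)^p = 1) by (apply Rmult_eq_reg_r with (w O); lra).
    assert (E2 : lam ^ p = 1).
    { rewrite <- (Rabs_right lam) by lra. rewrite <- Rabs_Ropp, RPow_abs, E1. apply Rabs_R1. }
    destruct (Rlt_or_le lam 1).
    - pose proof (pow_lt_1_compat lam p (conj (Rlt_le _ _ Hl) H) Hp). lra.
    - pose proof (Rlt_pow_R1 lam p ltac:(lra) Hp). lra. }
  pose proof (salt_tele u N) as T.
  unfold w in Hw0. simpl in Hw0.
  rewrite HN in T.
  rewrite (salt_ext N _ (fun k => lam * ((-1)^k * bet k) + (1 - lam) * ((-1)^k * u k))) in T.
  2:{ intros k _. rewrite Hu. ring. }
  rewrite salt_lin, HB in T.
  assert ((1 - lam) * salt N (fun k => (-1)^k * u k) = 0) by lra.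
  apply Rmult_integral in H. destruct H; auto. lra.
Qed.

Theorem proposition3p2 :
  forall (d : nat) (V : nat -> pt), simple_polygon d V ->
  forall (n : nat) (q : nat -> R * R) (it : nat -> nat),
    (0 < n)%nat ->
    Orbit d V 1 q it ->
    (forall k, q (k + 2 * n)%nat = q k) ->
    (lam_minus_stable d V q it \/ lam_plus_stable d V q it) ->
    snd (q 0%nat) =
      / INR (2 * n) *
      sum_f_R0 (fun k => (-1) ^ (S k) * INR k * beta d V (it k) (it (S k)))
               (2 * n - 1).
Proof.
  intros d V HP n q it Hn Horb Hper Hst.
  set (N := (2 * n)%nat).
  set (bet := fun k => beta d V (it k) (it (S k))).
  set (th := fun k => snd (q k)).
  assert (HN : (-1)^N = 1) by apply pow_1_even.
  assert (Hit : forall k, it (k + N)%nat = it k).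
  { intros k. apply (side_unique d V _ _ (fst (q k))).
    - rewrite <- Hper. exact (pstep_side _ _ _ _ _ _ _ (Horb (k + N)%nat)).
    - exact (pstep_side _ _ _ _ _ _ _ (Horb k)). }
  assert (Hb : forall k, bet (k + N)%nat = bet k).
  { intros k. unfold bet. replace (S (k + N)) with (S k + N)%nat by lia. rewrite !Hit. reflexivity. }
  assert (Hth : forall k, th (S k) = bet k - th k).
  { intros k. unfold th, bet. rewrite (pstep_angle _ _ _ _ _ _ _ HP (Horb k)). ring. }
  assert (HB : salt N (fun k => (-1)^k * bet k) = 0).
  { pose proof (salt_tele th N) as T.
    rewrite (salt_ext N _ (fun k => (-1)^k * bet k)) in T.
    2:{ intros k _. rewrite Hth. ring. }
    rewrite T, HN. unfold th. unfold N. rewrite <- (Nat.add_0_l (2*n)), Hper. ring. }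
  assert (HA : salt N (fun k => (-1)^k * th k) = 0).
  { assert (Gen : forall lam : nat -> R, (forall m, 0 < lam m) -> (forall m, lam m <> 1) ->
       forall Q : nat -> nat -> R * R,
       (forall m, PeriodicOrbit d V (lam m) (Q m) it) -> orbit_cv Q q ->
       salt N (fun k => (-1)^k * th k) = 0).
    { intros lam Hl Hl1 Q HQ Hcv.
      assert (Z : forall m, salt N (fun k => (-1)^k * snd (Q m k)) = 0).
      { intros m. destruct (HQ m) as [HO [p [Hp HQp]]].
        apply (pinball_alt N p (lam m) (fun k => snd (Q m k)) bet); auto.
        - intros k. rewrite HQp. reflexivity.
        - intros k. apply (pstep_angle _ _ _ _ _ _ _ HP (HO k)). }
      assert (C := salt_cv N (fun m k => (-1)^k * snd (Q m k)) (fun k => (-1)^k * th k)).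
      assert (C0 : Un_cv (fun m => salt N (fun k => (-1)^k * snd (Q m k))) 0).
      { intros e He. exists O. intros. rewrite Z, R_dist_eq. lra. }
      symmetry. apply (UL_sequence _ _ _ C0). apply C.
      intros k. apply CV_mult.
      - intros e He. exists O. intros. rewrite R_dist_eq. lra.
      - exact (proj2 (Hcv k)). }
    destruct Hst as [[lam [Hl [Hinc [Hc1 [Q [HQ Hcv]]]]]] | [lam [Hl [Hdec [Hc1 [Q [HQ Hcv]]]]]]].
    - apply (Gen lam Hl) with Q; auto.
      intros m. assert (lam (S m) <= 1) by (apply growing_ineq; auto; intros k; apply Rlt_le; auto).
      specialize (Hinc m). lra.
    - apply (Gen lam Hl) with Q; auto.
      intros m. assert (1 <= lam (S m)) by (apply decreasing_ineq; auto; intros k; apply Rlt_le; auto).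
      specialize (Hdec m). lra. }
  fold N. rewrite salt_sum. replace (S (N - 1)) with N by (unfold N; lia).
  rewrite (salt_ext N _ (fun k => (-1)^(S k) * INR k * (th k + th (S k)))).
  2:{ intros k _. fold (bet k). rewrite Hth. ring. }
  rewrite salt_T, HA, HN.
  assert (HthN : th N = th O). { unfold th, N. rewrite <- (Nat.add_0_l (2*n)), Hper. reflexivity. }
  rewrite HthN. fold (th O).
  assert (INR N <> 0). { apply not_0_INR. unfold N. lia. }
  field. auto.
Qed.
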